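(* Consider the following protocol. (1) Alice chooses $a\in\{0,1\}$ uniformly at random, prepares the two-qutrit state $\frac1{\sqrt2}|aa\rangle+\frac1{\sqrt2}|22\rangle$, and sends the second qutrit to Bob. (2) Bob chooses $x_0,x_1\in\{0,1\}$ uniformly at random, applies to the received qutrit the unitary $|0\rangle\mapsto(-1)^{x_0}|0\rangle$, $|1\rangle\mapsto(-1)^{x_1}|1\rangle$, $|2\rangle\mapsto|2\rangle$, and returns it to Alice. (3) Alice, who now holds $\frac{(-1)^{x_a}}{\sqrt2}|aa\rangle+\frac1{\sqrt2}|22\rangle$, performs a two-outcome measurement (depending on $a$) that reveals $x_a$ with certainty. Let $\delta\geq 0$ and $a\in\{0,1\}$. Suppose a cheating Alice, in place of step (1), prepares an arbitrary pure state $|\psi\rangle$ on a register of her own together with a qutrit, sends the qutrit to Bob, and that this state allows her (after Bob's step (2), with $x_0,x_1$ uniformly random) to guess $x_a$ correctly with probability at least $1-\delta$. Then $|\psi\rangle$ allows her to guess $x_{1-a}$ correctly with probability at most $\frac12+\sqrt{\delta(1-\delta)}+\delta$. In particular (taking $\delta=0$), $P^{\star}_{\mathrm{Alice}}=1/2$ for this protocol.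
   Context: $P^{\star}_{\mathrm{Alice}}$ denotes the maximum over $a\in\{0,1\}$ of the maximum, over cheating strategies of Alice that let her guess $x_a$ with certainty, of the probability that she correctly guesses $x_{1-a}$ and honest Bob, whose bits $x_0,x_1$ are uniformly random, does not abort. *)

(* Defs.v *)
(* Complex numbers: an arbitrary numClosedFieldType C
   (e.g. R[i] for a real closed field R, or algC). *)
From mathcomp Require Import all_boot all_order all_algebra.
Set Implicit Arguments. Unset Strict Implicit. Unset Printing Implicit Defensive.
Import Order.TTheory GRing.Theory Num.Theory.
Local Open Scope ring_scope.

Definition adj (C : numClosedFieldType) m n (A : 'M[C]_(m, n)) : 'M[C]_(n, m) :=
  map_mx (@Num.conj_op C) A^T.

Definition psdmx (C : numClosedFieldType) n (A : 'M[C]_n) : Prop :=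
  A = adj A /\ forall v : 'cV[C]_n, 0 <= (adj v *m A *m v) 0 0.

Definition povm (C : numClosedFieldType) n (I : finType) (M : I -> 'M[C]_n) : Prop :=
  (forall i, psdmx (M i)) /\ \sum_(i : I) M i = 1%:M.

(* A pure state on (Alice's n-dim register) (x) (qutrit): amplitude matrix
   Psi i j = <i,j|psi>, with unit norm. *)
Definition pure_state (C : numClosedFieldType) n (Psi : 'M[C]_(n, 3)) : Prop :=
  \sum_(i < n) \sum_(j < 3) `|Psi i j| ^+ 2 = 1.

Definition bob_unitary (C : numClosedFieldType) (x0 x1 : bool) : 'M[C]_3 :=
  diag_mx (\row_(j < 3) match val j with
                        | 0 => (-1) ^+ x0
                        | 1 => (-1) ^+ x1
                        | _ => 1 end).

(* joint state (ket in C^(n*3)) after Bob applies (I (x) U_{x0,x1}) *)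
Definition after_bob (C : numClosedFieldType) n (Psi : 'M[C]_(n, 3)) (x0 x1 : bool)
  : 'cV[C]_(n * 3) :=
  (mxvec (Psi *m bob_unitary C x0 x1))^T.

Definition prob (C : numClosedFieldType) m (E : 'M[C]_m) (v : 'cV[C]_m) : C :=
  (adj v *m E *m v) 0 0.

Definition bit (b x0 x1 : bool) : bool := if b then x1 else x0.

(* probability that Alice, measuring POVM M and outputting guess g i on
   outcome i, correctly guesses x_b, with x0,x1 uniform *)
Definition success (C : numClosedFieldType) n (Psi : 'M[C]_(n, 3)) (I : finType)
  (M : I -> 'M[C]_(n * 3)) (g : I -> bool) (b : bool) : C :=
  4^-1 * \sum_(x0 : bool) \sum_(x1 : bool)
           \sum_(i : I | g i == bit b x0 x1) prob (M i) (after_bob Psi x0 x1).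

(* P*_Alice = p : maximum over a and over cheating strategies (n, Psi, joint
   POVM with outcome (guess of x0, guess of x1)) that let Alice guess x_a with
   certainty, of the probability of guessing x_{1-a} (Bob never aborts). *)
Definition Pstar_Alice_is (C : numClosedFieldType) (p : C) : Prop :=
  (exists (a : bool) (n : nat) (Psi : 'M[C]_(n, 3)) (M : bool * bool -> 'M[C]_(n * 3)),
      [/\ pure_state Psi, povm M,
          success Psi M (fun g => bit a g.1 g.2) a = 1
        & success Psi M (fun g => bit (~~ a) g.1 g.2) (~~ a) = p])
  /\
  (forall (a : bool) (n : nat) (Psi : 'M[C]_(n, 3)) (M : bool * bool -> 'M[C]_(n * 3)),
      pure_state Psi -> povm M ->
      success Psi M (fun g => bit a g.1 g.2) a = 1 ->
      success Psi M (fun g => bit (~~ a) g.1 g.2) (~~ a) <= p).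

(* Main.v *)
From HB Require Import structures.
Require Import Defs.
From mathcomp Require Import all_boot all_order all_algebra.
From mathcomp Require Import ring lra.
Import Order.TTheory GRing.Theory Num.Theory.
Local Open Scope ring_scope.
Set Implicit Arguments. Unset Strict Implicit. Unset Printing Implicit Defensive.
Section RealSub.
Variable C : numClosedFieldType.
Definition realC := {x : C | x \is Num.real}.
HB.instance Definition _ := [isSub for (@proj1_sig C _) : realC -> C].
HB.instance Definition _ := [Choice of realC by <:].
HB.instance Definition _ := [SubChoice_isSubComUnitRing of realC by <:].
HB.instance Definition _ := [SubComUnitRing_isSubIntegralDomain of realC by <:].
HB.instance Definition _ := [SubIntegralDomain_isSubField of realC by <:].
Definition rle (x y : realC) := val x <= val y.
Definition rlt (x y : realC) := val x < val y.
Definition rnorm (x : realC) : realC := if 0 <= val x then x else - x.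
Lemma r_le0_add x y : rle 0 x -> rle 0 y -> rle 0 (x + y).
Proof. by rewrite /rle /= => ? ?; apply: addr_ge0. Qed.
Lemma r_le0_mul x y : rle 0 x -> rle 0 y -> rle 0 (x * y).
Proof. by rewrite /rle /= => ? ?; apply: mulr_ge0. Qed.
Lemma r_le0_anti x : rle 0 x -> rle x 0 -> x = 0.
Proof. by rewrite /rle => ? ?; apply: val_inj; apply/eqP; rewrite eq_le; apply/andP. Qed.
Lemma r_sub_ge0 x y : rle 0 (y - x) = rle x y.
Proof. by rewrite /rle /= subr_ge0. Qed.
Lemma r_le0_total x : rle 0 x || rle x 0.
Proof. by rewrite /rle /=; have := valP x; rewrite realE. Qed.
Lemma r_normN x : rnorm (- x) = rnorm x.
Proof.
have vN : val (- x) = - val x by [].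
rewrite /rnorm vN oppr_ge0 opprK.
case: (boolP (0 <= val x)) => h1; case: (boolP (val x <= 0)) => h2 //.
  apply: val_inj; rewrite vN; have -> : val x = 0 by apply/eqP; rewrite eq_le h1 h2.
  by rewrite oppr0.
by have := valP x; rewrite realE (negbTE h1) (negbTE h2).
Qed.
Lemma r_ge0_norm x : rle 0 x -> rnorm x = x.
Proof. by rewrite /rle /rnorm => ->. Qed.
Lemma r_lt_def x y : rlt x y = (y != x) && rle x y.
Proof. by rewrite /rlt /rle lt_def. Qed.
HB.instance Definition _ := Num.IntegralDomain_isLeReal.Build realC
  r_le0_add r_le0_mul r_le0_anti r_sub_ge0 r_le0_total r_normN r_ge0_norm r_lt_def.
End RealSub.

Section Lin.
Variable C : numClosedFieldType.

Lemma adjD m n (A B : 'M[C]_(m,n)) : adj (A + B) = adj A + adj B.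
Proof. by apply/matrixP => i j; rewrite !mxE rmorphD. Qed.
Lemma adjN m n (A : 'M[C]_(m,n)) : adj (- A) = - adj A.
Proof. by apply/matrixP => i j; rewrite !mxE rmorphN. Qed.
Lemma adjB m n (A B : 'M[C]_(m,n)) : adj (A - B) = adj A - adj B.
Proof. by rewrite adjD adjN. Qed.
Lemma adjZ m n (c : C) (A : 'M[C]_(m,n)) : adj (c *: A) = c^* *: adj A.
Proof. by apply/matrixP => i j; rewrite !mxE rmorphM. Qed.
Lemma adjM m n p (A : 'M[C]_(m,n)) (B : 'M[C]_(n,p)) : adj (A *m B) = adj B *m adj A.
Proof. by rewrite /adj trmx_mul map_mxM. Qed.
Lemma adjK m n (A : 'M[C]_(m,n)) : adj (adj A) = A.
Proof. by apply/matrixP => i j; rewrite !mxE conjCK. Qed.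
Lemma adj1 n : adj (1%:M : 'M[C]_n) = 1%:M.
Proof. by apply/matrixP => i j; rewrite !mxE rmorph_nat eq_sym. Qed.
Lemma adj_sum m n (I : finType) (P : pred I) (F : I -> 'M[C]_(m,n)) :
  adj (\sum_(i | P i) F i) = \sum_(i | P i) adj (F i).
Proof.
apply/matrixP => i j; rewrite !mxE !summxE rmorph_sum; apply: eq_bigr => k _.
by rewrite !mxE.
Qed.

Definition Q m (E : 'M[C]_m) (x y : 'cV[C]_m) : C := (adj x *m E *m y) 0 0.

Lemma QDl m (E : 'M[C]_m) x y z : Q E (x + y) z = Q E x z + Q E y z.
Proof. by rewrite /Q adjD !mulmxDl mxE. Qed.
Lemma QDr m (E : 'M[C]_m) x y z : Q E z (x + y) = Q E z x + Q E z y.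
Proof. by rewrite /Q !mulmxDr mxE. Qed.
Lemma QNl m (E : 'M[C]_m) x z : Q E (- x) z = - Q E x z.
Proof. by rewrite /Q adjN !mulNmx mxE. Qed.
Lemma QNr m (E : 'M[C]_m) x z : Q E z (- x) = - Q E z x.
Proof. by rewrite /Q !mulmxN mxE. Qed.
Lemma QZl m (E : 'M[C]_m) c x z : Q E (c *: x) z = c^* * Q E x z.
Proof. by rewrite /Q adjZ -!scalemxAl mxE. Qed.
Lemma QZr m (E : 'M[C]_m) c x z : Q E z (c *: x) = c * Q E z x.
Proof. by rewrite /Q -scalemxAr mxE. Qed.
Lemma QDE m (E F : 'M[C]_m) x z : Q (E + F) x z = Q E x z + Q F x z.
Proof. by rewrite /Q mulmxDr mulmxDl mxE. Qed.
Lemma QNE m (E : 'M[C]_m) x z : Q (- E) x z = - Q E x z.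
Proof. by rewrite /Q mulmxN mulNmx mxE. Qed.
Lemma QBE m (E F : 'M[C]_m) x z : Q (E - F) x z = Q E x z - Q F x z.
Proof. by rewrite QDE QNE. Qed.
Lemma Q_sum m (I : finType) (P : pred I) (F : I -> 'M[C]_m) x z :
  Q (\sum_(i | P i) F i) x z = \sum_(i | P i) Q (F i) x z.
Proof. by rewrite /Q mulmx_sumr mulmx_suml summxE. Qed.
Lemma Q_conj m (E : 'M[C]_m) x y : (Q E x y)^* = Q (adj E) y x.
Proof.
rewrite /Q; transitivity ((adj (adj x *m E *m y)) 0 0); first by rewrite !mxE.
by rewrite !adjM adjK mulmxA.
Qed.
Lemma Q1_ge0 m (x : 'cV[C]_m) : 0 <= Q 1%:M x x.
Proof.
rewrite /Q mulmx1 mxE; apply: sumr_ge0 => k _; rewrite !mxE.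
by rewrite mulrC -normCK exprn_ge0.
Qed.
Lemma prob_Q m (E : 'M[C]_m) v : prob E v = Q E v v.
Proof. by []. Qed.
End Lin.

Section Vec.
Variable C : numClosedFieldType.
Variable n : nat.
Definition o0 : 'I_3 := @Ordinal 3 0 isT.
Definition o1 : 'I_3 := @Ordinal 3 1 isT.
Definition o2 : 'I_3 := @Ordinal 3 2 isT.
Definition uu (Psi : 'M[C]_(n,3)) (j : 'I_3) : 'cV[C]_(n*3) := (mxvec (Psi *m delta_mx j j))^T.
Definition pp (Psi : 'M[C]_(n,3)) j : C := \sum_(i < n) `|Psi i j| ^+ 2.
Definition sg (x : bool) : C := (-1) ^+ x.

Lemma vec_inner (A B : 'M[C]_(n,3)) :
  Q 1%:M (mxvec A)^T (mxvec B)^T = \sum_i \sum_j (A i j)^* * B i j.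
Proof.
rewrite /Q mulmx1 mxE (reindex _ (curry_mxvec_bij n 3)) /= pair_bigA /=.
by apply: eq_bigr => -[i j] _; rewrite !mxE !mxvecE.
Qed.

Lemma entry_delta (Psi : 'M[C]_(n,3)) j i l :
  (Psi *m delta_mx j j) i l = (l == j)%:R * Psi i j.
Proof.
rewrite mxE (bigD1 j) //= big1 ?addr0; first by rewrite mxE eqxx /= mulrC.
by move=> k /negbTE hk; rewrite mxE hk mulr0.
Qed.

Lemma sum_delta (F : 'I_3 -> C) j : \sum_l (l == j)%:R * F l = F j.
Proof.
rewrite (bigD1 j) //= big1 ?addr0 ?eqxx ?mul1r //.
by move=> k /negbTE ->; rewrite mul0r.
Qed.

Lemma inner_u (Psi : 'M[C]_(n,3)) j k :
  Q 1%:M (uu Psi j) (uu Psi k) = (j == k)%:R * pp Psi j.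
Proof.
rewrite vec_inner.
under eq_bigr do under eq_bigr do
  rewrite !entry_delta rmorphM rmorph_nat -mulrA.
under eq_bigr do rewrite sum_delta.
case: eqP => [<-|_].
  rewrite mul1r; apply: eq_bigr => i _; by rewrite mul1r normCK mulrC.
by rewrite mul0r big1 // => i _; rewrite mul0r mulr0.
Qed.

Lemma bobE x0 x1 : bob_unitary C x0 x1 =
  sg x0 *: delta_mx o0 o0 + sg x1 *: delta_mx o1 o1 + delta_mx o2 o2.
Proof.
apply/matrixP => i j; rewrite !mxE.
case: i => [[|[|[|i]]] hi] //; case: j => [[|[|[|j]]] hj] //=; rewrite /sg /=; try ring.
Qed.

Lemma after_bobE (Psi : 'M[C]_(n,3)) x0 x1 :
  after_bob Psi x0 x1 = sg x0 *: uu Psi o0 + sg x1 *: uu Psi o1 + uu Psi o2.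
Proof.
by rewrite /after_bob bobE !mulmxDr -!scalemxAr !linearD !linearZ.
Qed.
End Vec.
Section Succ.
Variable C : numClosedFieldType.
Variable n : nat.

Lemma pure_pp (Psi : 'M[C]_(n,3)) : pure_state Psi ->
  pp Psi o0 + pp Psi o1 + pp Psi o2 = 1.
Proof.
rewrite /pure_state exchange_big /= !big_ord_recl big_ord0 addr0 addrA => <-.
by congr (_ + _ + _); apply: eq_bigr => i _; congr (`|Psi i _| ^+ 2); apply: val_inj.
Qed.

Lemma success_formula (Psi : 'M[C]_(n,3)) (M : bool -> 'M[C]_(n*3)) b :
  M true = 1%:M - M false -> pure_state Psi ->
  success Psi M id b = 2^-1 + Q (M false) (uu Psi (if b then o1 else o0)) (uu Psi o2)
     + Q (M false) (uu Psi o2) (uu Psi (if b then o1 else o0)).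
Proof.
move=> HM /pure_pp HP.
rewrite /success !big_bool /= !big_pred1_eq !prob_Q !after_bobE.
case: b; rewrite /bit /sg /= !expr0 !expr1 !scale1r !scaleN1r HM
  !(QDl,QDr,QNl,QNr,QBE) !inner_u /=.
all: have HP' : pp Psi o2 = 1 - pp Psi o0 - pp Psi o1 by rewrite -HP; ring.
all: rewrite HP'; by field.
Qed.
End Succ.
Section Tr.
Variable C : numClosedFieldType.
Lemma leRC (x y : realC C) : (x <= y) = (val x <= val y). Proof. by []. Qed.
Lemma valD' (x y : realC C) : val (x + y) = val x + val y. Proof. by []. Qed.
Lemma valM' (x y : realC C) : val (x * y) = val x * val y. Proof. by []. Qed.
Lemma valN' (x : realC C) : val (- x) = - val x. Proof. by []. Qed.
Lemma val1' : val (1 : realC C) = 1. Proof. by []. Qed.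
Lemma val0' : val (0 : realC C) = 0. Proof. by []. Qed.
Lemma valV' (x : realC C) : val (x^-1) = (val x)^-1. Proof. by []. Qed.
Lemma valn' k : val (k%:R : realC C) = k%:R.
Proof. by elim: k => // k IH; rewrite -natr1 valD' IH natr1. Qed.
Lemma valX' (x : realC C) k : val (x ^+ k) = (val x) ^+ k.
Proof. by elim: k => // k IH; rewrite !exprS valM' IH. Qed.
End Tr.

Section RealLemmas.
Variable R : realFieldType.
Lemma cs_real (Z p q : R) : 0 <= p -> 0 <= q ->
  (forall s, 2 * (s * Z) <= s * s * p + q) -> Z ^+ 2 <= p * q.
Proof.
move=> hp hq H.
have [p0|pgt0] := eqVneq p 0.
  have [Z0|Zn0] := eqVneq Z 0; first by rewrite Z0 p0 expr0n /= mul0r.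
  have := H ((q + 1) / (2 * Z)).
  have -> : 2 * ((q + 1) / (2 * Z) * Z) = q + 1 by field; rewrite Zn0.
  rewrite p0 mulr0 add0r; lra.
have hp' : 0 < p by rewrite lt_def pgt0 hp.
have := H (Z / p); set t := Z / p.
have hZ : Z = t * p by rewrite /t divfK.
rewrite hZ => h. nra.
Qed.

Lemma key_real (d Za Zb pa pb p2 s : R) :
  0 <= d -> d <= 1 -> 0 <= pa -> 0 <= pb -> 0 <= p2 -> pa + pb + p2 = 1 ->
  1 - d <= 2^-1 + Za -> Za ^+ 2 <= pa * p2 -> Zb ^+ 2 <= pb * p2 ->
  2 * Zb <= pb + p2 -> 0 <= s -> s ^+ 2 = d * (1 - d) ->
  2^-1 + Zb <= 2^-1 + s + d.
Proof.
move=> d0 d1 pa0 pb0 p20 hsum ha hZa hZb hZb' s0 hs.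
have [dh|dh] := lerP (2^-1) d; first lra.
have c0 : 0 < 2^-1 - d by lra.
have hZa2 : (2^-1 - d) ^+ 2 <= Za ^+ 2 by nra.
have hb : Zb ^+ 2 <= s ^+ 2.
  rewrite hs. have hpb : pb = 1 - pa - p2 by lra.
  rewrite hpb in hZb.
  have h1 : (2^-1 - d) ^+ 2 <= pa * p2 by lra.
  have h2 : 0 <= (p2 - 2^-1) ^+ 2 by apply: sqr_ge0.
  nra.
have [Zb0|Zb0] := lerP Zb 0; first lra.
have : Zb <= s by nra.
lra.
Qed.
End RealLemmas.

Section KC.
Variable C : numClosedFieldType.

Lemma K_ineq m (E : 'M[C]_m) x y : (forall z, 0 <= Q E z z) ->
  (forall z, Q E z z <= Q 1%:M z z) -> Q 1%:M x y = 0 -> Q 1%:M y x = 0 ->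
  2 * (Q E x y + Q E y x) <= Q 1%:M x x + Q 1%:M y y.
Proof.
move=> H0 H1 hxy hyx.
have e : 2 * (Q E x y + Q E y x) = Q E (x + y) (x + y) - Q E (x - y) (x - y).
  by rewrite !(QDl,QDr,QNl,QNr); ring.
have e2 : Q 1%:M x x + Q 1%:M y y = Q 1%:M (x + y) (x + y).
  by rewrite !(QDl,QDr) hxy hyx; ring.
rewrite e e2 -[X in _ <= X]addr0; apply: lerD; first exact: H1.
by rewrite oppr_le0.
Qed.

Lemma K_scaled m (E : 'M[C]_m) u y (s : C) : s^* = s -> (forall z, 0 <= Q E z z) ->
  (forall z, Q E z z <= Q 1%:M z z) -> Q 1%:M u y = 0 -> Q 1%:M y u = 0 ->
  2 * (s * (Q E u y + Q E y u)) <= s * s * Q 1%:M u u + Q 1%:M y y.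
Proof.
move=> hs H0 H1 huy hyu.
have := @K_ineq m E (s *: u) y H0 H1.
rewrite !(QZl, QZr) hs huy hyu mulr0 => /(_ erefl erefl).
move=> h; rewrite mulrDr -mulrA. exact: h.
Qed.

Lemma key_C (d Za Zb pa pb p2 : C) :
  Za \is Num.real -> Zb \is Num.real ->
  0 <= d -> d <= 1 -> 0 <= pa -> 0 <= pb -> 0 <= p2 -> pa + pb + p2 = 1 ->
  1 - d <= 2^-1 + Za ->
  (forall s : C, s \is Num.real -> 2 * (s * Za) <= s * s * pa + p2) ->
  (forall s : C, s \is Num.real -> 2 * (s * Zb) <= s * s * pb + p2) ->
  2^-1 + Zb <= 2^-1 + sqrtC (d * (1 - d)) + d.
Proof.
move=> rZa rZb d0 d1 pa0 pb0 p20 hsum ha Ka Kb.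
have hdd : 0 <= d * (1 - d) by rewrite mulr_ge0 // subr_ge0.
have s0 : 0 <= sqrtC (d * (1 - d)) by rewrite sqrtC_ge0.
pose dR : realC C := exist _ d (ger0_real d0).
pose paR : realC C := exist _ pa (ger0_real pa0).
pose pbR : realC C := exist _ pb (ger0_real pb0).
pose p2R : realC C := exist _ p2 (ger0_real p20).
pose ZaR : realC C := exist _ Za rZa.
pose ZbR : realC C := exist _ Zb rZb.
pose sR : realC C := exist _ (sqrtC (d * (1 - d))) (ger0_real s0).
have hsR : 0 <= sR by [].
have hsum' : paR + pbR + p2R = 1 by apply: val_inj; rewrite /= ?valD' /= hsum.
have ha' : 1 - dR <= 2^-1 + ZaR.
  rewrite leRC ?(valD', valN', valV', valn') /= ?val1'; exact: ha.
have cA : ZaR ^+ 2 <= paR * p2R.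
  apply: (@cs_real (realC C) ZaR paR p2R) => //= s.
  rewrite leRC ?(valD', valM', valn') /=; exact: Ka (valP s).
have cB : ZbR ^+ 2 <= pbR * p2R.
  apply: (@cs_real (realC C) ZbR pbR p2R) => //= s.
  rewrite leRC ?(valD', valM', valn') /=; exact: Kb (valP s).
have cB' : 2 * ZbR <= pbR + p2R.
  rewrite leRC ?(valD', valM', valn') /=.
  by have := Kb 1 (real1 _); rewrite !mul1r.
have hs2 : sR ^+ 2 = dR * (1 - dR).
  by apply: val_inj; rewrite /= ?(valM', valX', valD', valN', val1') /= -expr2 sqrtCK.
have := @key_real (realC C) dR ZaR ZbR paR pbR p2R sR d0 d1 pa0 pb0 p20
  hsum' ha' cA cB cB' hsR hs2.
by rewrite leRC ?(valD', valV', valn').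
Qed.
End KC.

Section Part1.
Variable C : numClosedFieldType.

Lemma povm_bool m (M : bool -> 'M[C]_m) : povm M ->
  [/\ M true = 1%:M - M false, forall z, 0 <= Q (M false) z z,
      forall z, Q (M false) z z <= Q 1%:M z z & M false = adj (M false)].
Proof.
move=> [hp hs]; rewrite big_bool /= in hs.
have hT : M true = 1%:M - M false by rewrite -hs addrK.
have [hf1 hf2] := hp false; have [ht1 ht2] := hp true.
split => // z.
by rewrite -subr_ge0 -QBE -hT; apply: ht2.
Qed.

Lemma Z_real m (E : 'M[C]_m) x y : E = adj E -> (Q E x y + Q E y x) \is Num.real.
Proof.
move=> hE; apply/CrealP. by rewrite rmorphD /= !Q_conj -hE addrC.
Qed.

Lemma pp_ge0 n (Psi : 'M[C]_(n,3)) j : 0 <= pp Psi j.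
Proof. by apply: sumr_ge0 => i _; rewrite exprn_ge0. Qed.

Lemma part1 (delta : C) (a : bool) (n : nat) (Psi : 'M[C]_(n, 3)) :
      0 <= delta -> delta <= 1 -> pure_state Psi ->
      (exists M : bool -> 'M[C]_(n * 3), povm M /\ 1 - delta <= success Psi M id a) ->
      forall M' : bool -> 'M[C]_(n * 3), povm M' ->
        success Psi M' id (~~ a) <= 2^-1 + sqrtC (delta * (1 - delta)) + delta.
Proof.
move=> d0 d1 HP [M [HM hs]] M' HM'.
have [hT h0 h1 hh] := povm_bool HM.
have [hT' h0' h1' hh'] := povm_bool HM'.
rewrite (success_formula _ hT HP) in hs.
rewrite (success_formula _ hT' HP).
have HP' := pure_pp HP.
set ja := (if a then o1 else o0).
set jb := (if ~~ a then o1 else o0).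
have hab : pp Psi ja + pp Psi jb + pp Psi o2 = 1.
  by rewrite /ja /jb; case: (a) => /=; rewrite -HP'; ring.
have orth : forall j, j != o2 -> Q 1%:M (uu Psi j) (uu Psi o2) = 0 /\ Q 1%:M (uu Psi o2) (uu Psi j) = 0.
  move=> j hj; rewrite !inner_u (negbTE hj) eq_sym (negbTE hj); by rewrite !mul0r.
have ja2 : ja != o2 by rewrite /ja; case: (a).
have jb2 : jb != o2 by rewrite /jb; case: (a).
have [oa1 oa2] := orth _ ja2.
have [ob1 ob2] := orth _ jb2.
have ppE : forall j, Q 1%:M (uu Psi j) (uu Psi j) = pp Psi j.
  by move=> j; rewrite inner_u eqxx mul1r.
rewrite -!addrA [X in _ <= X]addrA.
apply: (key_C (Za := Q (M false) (uu Psi ja) (uu Psi o2) + Q (M false) (uu Psi o2) (uu Psi ja))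
              (pa := pp Psi ja) (pb := pp Psi jb) (p2 := pp Psi o2)).
- exact: Z_real.
- exact: Z_real.
- by [].
- by [].
- exact: pp_ge0.
- exact: pp_ge0.
- exact: pp_ge0.
- by [].
- by rewrite addrA.
- move=> s /conj_Creal hs0; rewrite -!ppE; exact: K_scaled.
- move=> s /conj_Creal hs0; rewrite -!ppE; exact: K_scaled.
Qed.
End Part1.

Section Part2.
Variable C : numClosedFieldType.

Lemma sum_bb (R : zmodType) (F : bool * bool -> R) :
  \sum_p F p = F (true,true) + F (true, false) + (F (false,true) + F (false,false)).
Proof.
rewrite (eq_bigr (fun p => F (p.1, p.2))); last by case.
by rewrite -(pair_bigA _ (fun i j => F (i, j))) /= !big_bool.
Qed.

Lemma success_coarse n (Psi : 'M[C]_(n,3)) (I : finType) (M : I -> 'M[C]_(n*3)) (g : I -> bool) b :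
  success Psi M g b = success Psi (fun c => \sum_(i | g i == c) M i) id b.
Proof.
rewrite /success; congr (_ * _); apply: eq_bigr => x0 _; apply: eq_bigr => x1 _.
by rewrite /= big_pred1_eq prob_Q Q_sum.
Qed.

Lemma povm_coarse m (I : finType) (M : I -> 'M[C]_m) (g : I -> bool) :
  povm M -> povm (fun c => \sum_(i | g i == c) M i).
Proof.
move=> [hp hs]; split.
  move=> c; split.
    by rewrite adj_sum; apply: eq_bigr => i _; have [] := hp i.
  move=> v; have := Q_sum (fun i => g i == c) M v v; rewrite /Q => ->.
  by apply: sumr_ge0 => i _; have [] := hp i.
rewrite big_bool /= -hs [RHS](bigID (fun i => g i)) /=.
by congr (_ + _); apply: eq_bigl => i; [rewrite eqb_id | rewrite eqbF_neg].
Qed.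

Lemma QP m (phi x y : 'cV[C]_m) :
  Q (phi *m adj phi) x y = Q 1%:M x phi * Q 1%:M phi y.
Proof.
by rewrite /Q !mulmx1 mulmxA -(mulmxA (adj x *m phi)) [in LHS]mxE big_ord1.
Qed.

Lemma psd_proj m (phi : 'cV[C]_m) : Q 1%:M phi phi = 1 ->
  psdmx (phi *m adj phi) /\ psdmx (1%:M - phi *m adj phi).
Proof.
move=> h1.
have herm : phi *m adj phi = adj (phi *m adj phi) by rewrite adjM adjK.
have c1 : forall z, Q 1%:M z phi = (Q 1%:M phi z)^* by move=> z; rewrite Q_conj adj1.
split; split.
- exact: herm.
- move=> v; rewrite -/(Q _ v v) QP c1 mulrC -normCK; exact: exprn_ge0.
- by rewrite adjB adj1 -herm.
- move=> v; rewrite -/(Q _ v v) QBE QP c1.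
  set w := Q 1%:M phi v.
  have e : Q 1%:M (v - w *: phi) (v - w *: phi) = Q 1%:M v v - w^* * w.
    rewrite !(QDl, QDr, QNl, QNr, QZl, QZr) h1 c1 -/w; ring.
  rewrite -e; exact: Q1_ge0.
Qed.
End Part2.

Section Part3.
Variable C : numClosedFieldType.

Lemma pure_sum n (Psi : 'M[C]_(n,3)) :
  \sum_(i < n) \sum_(j < 3) `|Psi i j| ^+ 2 = pp Psi o0 + pp Psi o1 + pp Psi o2.
Proof.
rewrite exchange_big /= !big_ord_recl big_ord0 addr0 addrA.
by congr (_ + _ + _); apply: eq_bigr => i _; congr (`|Psi i _| ^+ 2); apply: val_inj.
Qed.

Lemma Q0E m (x y : 'cV[C]_m) : Q 0 x y = 0.
Proof. by rewrite /Q mulmx0 mul0mx mxE. Qed.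

Lemma adj0 m n : adj (0 : 'M[C]_(m,n)) = 0.
Proof. by apply/matrixP => i j; rewrite !mxE rmorph0. Qed.

Lemma exists_part : exists (a : bool) (n : nat) (Psi : 'M[C]_(n, 3)) (M : bool * bool -> 'M[C]_(n * 3)),
      [/\ pure_state Psi, povm M,
          success Psi M (fun g => bit a g.1 g.2) a = 1
        & success Psi M (fun g => bit (~~ a) g.1 g.2) (~~ a) = 2^-1].
Proof.
set r := sqrtC (2^-1 : C).
have r0 : 0 <= r by rewrite sqrtC_ge0 invr_ge0 ler0n.
have r2 : r * r = 2^-1 by rewrite -expr2 sqrtCK.
pose Psi : 'M[C]_(1,3) := \matrix_(i, j) (if j == o1 then 0 else r).
have pp0 : pp Psi o0 = 2^-1 by rewrite /pp big_ord1 mxE /= ger0_norm // expr2 r2.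
have pp1 : pp Psi o1 = 0 by rewrite /pp big_ord1 mxE /= normr0 expr0n.
have pp2 : pp Psi o2 = 2^-1 by rewrite /pp big_ord1 mxE /= ger0_norm // expr2 r2.
have HP : pure_state Psi.
  by rewrite /pure_state pure_sum pp0 pp1 pp2; field.
pose phi := uu Psi o0 + uu Psi o2.
have hphi : Q 1%:M phi phi = 1.
  by rewrite /phi !(QDl, QDr) !inner_u /= pp0 pp2; field.
have [hP1 hP2] := psd_proj hphi.
pose P := phi *m adj phi.
pose M (g : bool * bool) : 'M[C]_(1*3) := if g.2 then 0 else if g.1 then 1%:M - P else P.
have HM : povm M.
  split.
    case=> [[] []] /=; rewrite /M /= //.
      by split; [rewrite adj0 | move=> v; rewrite -/(Q _ v v) Q0E].
    by split; [rewrite adj0 | move=> v; rewrite -/(Q _ v v) Q0E].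
  by rewrite sum_bb /M /= !add0r subrK.
exists false, 1%N, Psi, M; split => //.
- rewrite success_coarse.
  have [hT _ _ _] := povm_bool (povm_coarse (fun g => bit false g.1 g.2) HM).
  rewrite (success_formula _ hT HP) /= !Q_sum; do 2!rewrite big_mkcond sum_bb; rewrite /M /= !Q0E.
  by rewrite !QP /phi !(QDl, QDr) !inner_u /= pp0 pp2; field.
- rewrite success_coarse.
  have [hT _ _ _] := povm_bool (povm_coarse (fun g => bit true g.1 g.2) HM).
  rewrite (success_formula _ hT HP) /= !Q_sum; do 2!rewrite big_mkcond sum_bb; rewrite /M /= ?Q0E.
  by rewrite !QBE !QP /phi !(QDl, QDr) !inner_u /= pp0 pp1 pp2; field.
Qed.
End Part3.

Unset Implicit Arguments.
Theorem proposition6 (C : numClosedFieldType) :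
  (forall (delta : C) (a : bool) (n : nat) (Psi : 'M[C]_(n, 3)),
      0 <= delta -> delta <= 1 -> pure_state Psi ->
      (exists M : bool -> 'M[C]_(n * 3), povm M /\ 1 - delta <= success Psi M id a) ->
      forall M' : bool -> 'M[C]_(n * 3), povm M' ->
        success Psi M' id (~~ a) <= 2^-1 + sqrtC (delta * (1 - delta)) + delta)
  /\ Pstar_Alice_is (2^-1 : C).
Proof.
split; first exact: (@part1 C).
split; first exact: exists_part.
move=> a n Psi M HP HM hs.
rewrite success_coarse.
have := @part1 C 0 a n Psi (lexx 0) ler01 HP _ _ (povm_coarse (fun g => bit (~~ a) g.1 g.2) HM).
rewrite mul0r sqrtC0 !addr0; apply.
exists (fun c => \sum_(i | bit a i.1 i.2 == c) M i); split; first exact: povm_coarse.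
by rewrite -success_coarse hs subr0.
Qed.
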